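(* Consider the class-incremental setting described in the context, where the TII predictor is induced by OOD detectors $P_1,\dots,P_t$. Let $\delta,\eta\ge0$ and $\epsilon_1,\dots,\epsilon_t\ge0$. If $H_{\rm WTP}(\boldsymbol{x})\le\delta$, $H_{\rm TAP}(\boldsymbol{x})\le\eta$, and $H_{{\rm OOD},i}(\boldsymbol{x})\le\epsilon_i$ for all $i\in[t]$, for every input $\boldsymbol{x}$, then the loss error satisfies $$\mathcal L\in\Big[0,\ \max\Big\{\delta+\mathbb{E}_{\boldsymbol{x}\sim\mu}\Big[\Big(\sum_{i}\mathbf 1_{\boldsymbol{x}\in\mathcal X_i}e^{\epsilon_i}\Big)\Big(\sum_i\mathbf 1_{\boldsymbol{x}\notin\mathcal X_i}(1-e^{-\epsilon_i})\Big)\Big],\ \eta\Big\}\Big],$$ where $\boldsymbol{x}\in\mathcal X_i$ means $i=\bar i(\boldsymbol{x})$, so the integrand equals $e^{\epsilon_{\bar i(\boldsymbol{x})}}\sum_{j\ne\bar i(\boldsymbol{x})}(1-e^{-\epsilon_j})$.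
   Context: Class-incremental setting (CIL). Fix $t\ge1$ tasks; task $i$ has within-task class indices $[n_i]$; $C=\{(i,j):i\in[t],j\in[n_i]\}$ is the set of all classes (distinct across tasks). Let $\mu$ be a probability distribution on inputs; each $\boldsymbol{x}$ has ground-truth task $\bar i(\boldsymbol{x})$, within-task index $\bar j(\boldsymbol{x})$ and label $y(\boldsymbol{x})=(\bar i,\bar j)$; write $\boldsymbol{x}\in\mathcal X_i$ iff $\bar i(\boldsymbol{x})=i$. An OOD detector for task $i$ assigns to $\boldsymbol{x}$ a number $P_i(\boldsymbol{x})\in[0,1]$, with cross-entropy $H_{{\rm OOD},i}(\boldsymbol{x})=-\log P_i(\boldsymbol{x})$ if $\boldsymbol{x}\in\mathcal X_i$ and $-\log(1-P_i(\boldsymbol{x}))$ otherwise. The induced TII probability is $P(\boldsymbol{x}\in\mathcal X_i\mid\mathcal D,\theta)=P_i(\boldsymbol{x})/\sum_jP_j(\boldsymbol{x})$. WTP predictors give, for each $i$, distributions $\big(P(\boldsymbol{x}\in\mathcal X_{i,j}\mid\boldsymbol{x}\in\mathcal X_i,\mathcal D,\theta)\big)_{j\in[n_i]}$; the joint prediction is $P(\boldsymbol{x}\in\mathcal X_{i,j}\mid\mathcal D,\theta)=P(\boldsymbol{x}\in\mathcal X_i\mid\mathcal D,\theta)P(\boldsymbol{x}\in\mathcal X_{i,j}\mid\boldsymbol{x}\in\mathcal X_i,\mathcal D,\theta)$; a TAP predictor gives a separate distribution $\big(P(\boldsymbol{x}\in\mathcal X^c\mid\mathcal D,\theta)\big)_{c\in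 C}$. All are measurable in $\boldsymbol{x}$. With $-\log0=+\infty$: $H_{\rm WTP}(\boldsymbol{x})=-\log P(\boldsymbol{x}\in\mathcal X_{\bar i,\bar j}\mid\boldsymbol{x}\in\mathcal X_{\bar i},\mathcal D,\theta)$, $H_{\rm TAP}(\boldsymbol{x})=-\log P(\boldsymbol{x}\in\mathcal X^{y(\boldsymbol{x})}\mid\mathcal D,\theta)$. The loss error is $\mathcal L=\max\{\mathbb{E}_{\boldsymbol{x}\sim\mu}[-\log P(\boldsymbol{x}\in\mathcal X_{\bar i,\bar j}\mid\mathcal D,\theta)],\ \mathbb{E}_{\boldsymbol{x}\sim\mu}[H_{\rm TAP}(\boldsymbol{x})]\}$. *)

(* Defs.v *)
From HB Require Import structures.
From mathcomp Require Import all_boot all_order all_algebra.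
From mathcomp Require Import all_classical all_reals all_analysis.
Set Implicit Arguments. Unset Strict Implicit. Unset Printing Implicit Defensive.
Import Order.TTheory GRing.Theory Num.Theory.
Local Open Scope ring_scope.
Local Open Scope classical_set_scope.

(* The set C of all classes (i,j), i task, j within-task index. *)
Definition classes (t : nat) (n : 'I_t -> nat) : finType := {i : 'I_t & 'I_(n i)}.

Section CIL.
Variable R : realType.

(* -log p, with the convention -log 0 = +oo (values <= 0 give +oo). *)
Definition neglog (p : R) : \bar R := if 0 < p then (- ln p)%:E else +oo%E.

Variables (t : nat) (n : 'I_t -> nat) (T : Type) (y : T -> classes n).

Definition ibar (x : T) : 'I_t := tag (y x).
Definition jbar (x : T) : 'I_(n (ibar x)) := tagged (y x).

Definition H_OOD (P : 'I_t -> T -> R) (i : 'I_t) (x : T) : \bar R :=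
  if ibar x == i then neglog (P i x) else neglog (1 - P i x).

Definition TII (P : 'I_t -> T -> R) (i : 'I_t) (x : T) : R :=
  P i x / \sum_(j < t) P j x.

Definition joint_true (P : 'I_t -> T -> R)
  (W : forall i : 'I_t, T -> 'I_(n i) -> R) (x : T) : R :=
  TII P (ibar x) x * W (ibar x) x (jbar x).

Definition H_WTP (W : forall i : 'I_t, T -> 'I_(n i) -> R) (x : T) : \bar R :=
  neglog (W (ibar x) x (jbar x)).

Definition H_TAP (Q : T -> classes n -> R) (x : T) : \bar R := neglog (Q x (y x)).

End CIL.

Definition loss_error (R : realType) (d : measure_display) (X : measurableType d)
  (mu : probability X R) (t : nat) (n : 'I_t -> nat) (y : X -> classes n)
  (P : 'I_t -> X -> R) (W : forall i : 'I_t, X -> 'I_(n i) -> R)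
  (Q : X -> classes n -> R) : \bar R :=
  maxe (\int[mu]_x neglog (joint_true y P W x))%E
       (\int[mu]_x H_TAP y Q x)%E.

Definition bound_integrand (R : realType) (t : nat) (n : 'I_t -> nat) (T : Type)
  (y : T -> classes n) (eps : 'I_t -> R) (x : T) : R :=
  (\sum_(i < t) (if ibar y x == i then expR (eps i) else 0)) *
  (\sum_(i < t) (if ibar y x != i then 1 - expR (- eps i) else 0)).

(* Main.v *)
Require Import Defs.
From HB Require Import structures.
From mathcomp Require Import all_boot all_order all_algebra.
From mathcomp Require Import all_classical all_reals all_analysis.
From mathcomp Require Import measurable_realfun.
Import Order.TTheory GRing.Theory Num.Theory.
Local Open Scope ring_scope.
Local Open Scope classical_set_scope.
Section aux.
Variable R : realType.
Lemma neglog_ge0 (p : R) : p <= 1 -> (0 <= neglog p)%E.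
Proof.
move=> p1; rewrite /neglog; case: ifP => // _.
by rewrite lee_fin oppr_ge0 ln_le0.
Qed.

Lemma neglog_pos (p : R) : 0 < p -> neglog p = (- ln p)%:E.
Proof. by move=> p0; rewrite /neglog p0. Qed.
Lemma neglog_le (p e : R) : (neglog p <= e%:E)%E -> 0 < p /\ expR (- e) <= p.
Proof.
rewrite /neglog; case: ifP => // p0; rewrite lee_fin => h; split => //.
rewrite -(lnK p0) ler_expR; by rewrite lerNl.
Qed.
End aux.
Arguments neglog_le {R p e}.
Arguments neglog_pos {R p}.
Arguments neglog_ge0 {R p}.

Lemma pointwise (R : realType) (t : nat) (n : 'I_t -> nat) (T : Type)
  (y : T -> classes n) (P : 'I_t -> T -> R)
  (W : forall i : 'I_t, T -> 'I_(n i) -> R) (delta : R) (eps : 'I_t -> R) x :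
  (forall i x, 0 <= P i x <= 1) ->
  (H_WTP y W x <= delta%:E)%E ->
  (forall i, (H_OOD y P i x <= (eps i)%:E)%E) ->
  (neglog (joint_true y P W x) <= (delta + bound_integrand y eps x)%:E)%E.
Proof.
move=> P01 hW hO.
set i := ibar y x.
have [w0 _] := neglog_le hW.
have hWl : - ln (W i x (jbar y x)) <= delta.
  by move: hW; rewrite /H_WTP (neglog_pos w0) lee_fin.
have [pi0 pie] : 0 < P i x /\ expR (- eps i) <= P i x.
  by apply: neglog_le; have := hO i; rewrite /H_OOD eqxx.
have pje j : j != i -> P j x <= 1 - expR (- eps j).
  move=> ji; have := hO j; rewrite /H_OOD.
  rewrite (_ : (ibar y x == j) = false); last by apply/negbTE; rewrite eq_sym.
  by move/neglog_le => [_]; rewrite lerBrDl -lerBrDr.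
set Rs := \sum_(j < t | j != i) P j x.
have Rs0 : 0 <= Rs by apply: sumr_ge0 => j _; case/andP: (P01 j x).
have SE : \sum_(j < t) P j x = P i x + Rs by rewrite (bigD1 i).
have S0 : 0 < \sum_(j < t) P j x by rewrite SE ltr_wpDr.
have tii0 : 0 < TII P i x by rewrite /TII divr_gt0.
have j0 : 0 < joint_true y P W x by rewrite /joint_true -/i mulr_gt0.
rewrite (neglog_pos j0) lee_fin /joint_true -/i lnM ?posrE // opprD.
rewrite addrC lerD //.
have -> : - ln (TII P i x) = ln (1 + Rs / P i x).
  rewrite -lnV ?posrE // /TII invf_div SE mulrDl divff ?gt_eqF //.
apply: le_trans (le_ln1Dx _) _.
  by apply: lt_le_trans (divr_ge0 Rs0 (ltW pi0)); rewrite ltrN10.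
have -> : bound_integrand y eps x =
    expR (eps i) * \sum_(j < t | j != i) (1 - expR (- eps j)).
  rewrite /bound_integrand -/i; congr (_ * _).
    rewrite -big_mkcond /=.
    by rewrite (eq_bigl (fun j => j == i)) ?big_pred1_eq // => j; rewrite eq_sym.
  by rewrite -big_mkcond /=; apply: eq_bigl => j; rewrite eq_sym.
rewrite [X in X <= _]mulrC ler_pM //.
- by rewrite invr_ge0 ltW.
- rewrite -[eps i]opprK expRN lef_pV2 ?posrE ?expR_gt0 //.
- by apply: ler_sum => j ji; apply: pje.
Qed.

Lemma le_int_nm (R : realType) d (X : measurableType d) (mu : {measure set X -> \bar R})
  (f g : X -> \bar R) : (forall x, (0 <= f x)%E) -> (forall x, (f x <= g x)%E) ->
  (\int[mu]_x f x <= \int[mu]_x g x)%E.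
Proof.
move=> f0 fg; rewrite !ge0_integralTE //; last by move=> x; apply: le_trans (fg x).
apply: ereal_sup_le => _ [h hf <-]; exists h => //= x.
exact: le_trans (hf x) (fg x).
Qed.

Lemma meas_comp_y d (X : measurableType d) d2 (T2 : measurableType d2)
  (t : nat) (n : 'I_t -> nat) (y : X -> classes n) (g : classes n -> T2) :
  (forall c : classes n, measurable (y @^-1` [set c])) ->
  measurable_fun setT (fun x => g (y x)).
Proof.
move=> my _ B mB; rewrite setTI.
have -> : (fun x => g (y x)) @^-1` B = \bigcup_(c in [set c | B (g c)]) y @^-1` [set c].
  apply/seteqP; split => x /=.
    by move=> Bx; exists (y x).
  by move=> [c Bc /= ->].
apply: fin_bigcup_measurable => //; exact: finite_finset.
Qed.

Lemma meas_comp_yE d (X : measurableType d) (R : realType)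
  (t : nat) (n : 'I_t -> nat) (y : X -> classes n) (g : classes n -> \bar R) :
  (forall c : classes n, measurable (y @^-1` [set c])) ->
  measurable_fun setT (fun x => g (y x)).
Proof. exact: (@meas_comp_y d X _ (\bar R) t n y g). Qed.

Lemma le_sum1 (I : finType) (R : realType) (F : I -> R) a :
  (forall i, 0 <= F i) -> F a <= \sum_i F i.
Proof.
move=> F0; rewrite (bigD1 a) //= lerDl; exact: sumr_ge0.
Qed.

Theorem theorem8 (R : realType) (d : measure_display) (X : measurableType d)
  (mu : probability X R) (t : nat) (n : 'I_t -> nat)
  (y : X -> classes n)
  (P : 'I_t -> X -> R)
  (W : forall i : 'I_t, X -> 'I_(n i) -> R)
  (Q : X -> classes n -> R)
  (delta eta : R) (eps : 'I_t -> R) :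
  (0 < t)%N ->
  (* labels are measurable *)
  (forall c : classes n, measurable (y @^-1` [set c])) ->
  (* OOD detectors: values in [0,1], measurable *)
  (forall i x, 0 <= P i x <= 1) ->
  (forall i, measurable_fun setT (P i)) ->
  (* WTP predictors: probability distributions, measurable *)
  (forall i x j, 0 <= W i x j) ->
  (forall i x, \sum_(j < n i) W i x j = 1) ->
  (forall i j, measurable_fun setT (fun x => W i x j)) ->
  (* TAP predictor: probability distribution over C, measurable *)
  (forall x c, 0 <= Q x c) ->
  (forall x, \sum_(c : classes n) Q x c = 1) ->
  (forall c, measurable_fun setT (fun x => Q x c)) ->
  0 <= delta -> 0 <= eta -> (forall i, 0 <= eps i) ->
  (forall x, (H_WTP y W x <= delta%:E)%E) ->
  (forall x, (H_TAP y Q x <= eta%:E)%E) ->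
  (forall i x, (H_OOD y P i x <= (eps i)%:E)%E) ->
  (0 <= loss_error mu y P W Q)%E /\
  (loss_error mu y P W Q <=
     maxe (delta%:E + \int[mu]_x (bound_integrand y eps x)%:E) eta%:E)%E.
Proof.
have mu1 : (mu : {measure set X -> \bar R}) [set: X] = 1%E by exact: probability_setT.
move=> t0 my P01 mP W0 W1 mW Q0 Q1 mQ d0 e0 eps0 hW hT hO.
have J1 x : joint_true y P W x <= 1.
  rewrite /joint_true -[1]mulr1; apply: ler_pM.
  - rewrite /TII divr_ge0 //; first by case/andP: (P01 (ibar y x) x).
    by apply: sumr_ge0 => j _; case/andP: (P01 j x).
  - exact: W0.
  - rewrite /TII; set S := \sum_(j < t) P j x.
    have hS : P (ibar y x) x <= S.
      by apply: le_sum1 => j; case/andP: (P01 j x).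
    have [S0|S0] := eqVneq S 0; first by rewrite S0 invr0 mulr0.
    have Sp : 0 < S by rewrite lt_neqAle eq_sym S0 /= (le_trans _ hS) //; case/andP: (P01 (ibar y x) x).
    by rewrite ler_pdivrMr // mul1r.
  - by rewrite -(W1 (ibar y x) x); apply: le_sum1 => j; exact: W0.
have Qle x : Q x (y x) <= 1 by rewrite -(Q1 x); apply: le_sum1 => c; exact: Q0.
have f0 x : (0 <= neglog (joint_true y P W x))%E by apply: neglog_ge0.
have T0 x : (0 <= H_TAP y Q x)%E by apply: neglog_ge0.
have b0 x : 0 <= bound_integrand y eps x.
  rewrite /bound_integrand mulr_ge0 //.
    by apply: sumr_ge0 => i _; case: ifP => // _; exact: ltW (expR_gt0 _).
  apply: sumr_ge0 => i _; case: ifP => // _.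
  by rewrite subr_ge0 expR_le1 oppr_le0.
split.
  by rewrite /loss_error le_max integral_ge0.
rewrite /loss_error; apply: le_max2.
  apply: le_trans (@le_int_nm _ _ _ mu _ (fun x => (delta + bound_integrand y eps x)%:E) f0 _) _.
    by move=> x; apply: pointwise => // i; apply: hO.
  have mb : measurable_fun setT (fun x => (bound_integrand y eps x)%:E) :=
    @meas_comp_yE _ X R t n y (fun c => (bound_integrand (fun c' : classes n => c') eps c)%:E) my.
  under eq_integral do rewrite EFinD.
  rewrite ge0_integralD //; last by move=> x _; rewrite lee_fin.
  by rewrite integral_cst // mu1 mule1.
apply: le_trans (@le_int_nm _ _ _ mu _ (fun x => eta%:E) T0 hT) _.
by rewrite integral_cst // mu1 mule1.
Qed.
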